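(* Let $0<p<1$, $0\le y<1$, and let $n\ge 1$ be an integer. Define $Q(n,y,p)=\sum_{k=0}^\infty (-p\,k)_n(-y)^k$. Then \[ Q(n,y,p)=(-1)^{n+1}\frac{y}{y+1}\sum_{k=1}^n s(n,k)(-p)^k\sum_{m=1}^k S(k,m)\,m!\left(-\frac{1}{y+1}\right)^m =(-1)^{n+1}\frac{y}{y+1}\sum_{k=1}^n s(n,k)(-p)^k\,\omega_k\!\left(-\frac{1}{y+1}\right). \]
   Context: $(x)_n=x(x+1)\cdots(x+n-1)$ is the rising factorial. $s(n,k)$ are the (signed) Stirling numbers of the first kind, defined by $x(x-1)\cdots(x-n+1)=\sum_{k=0}^n s(n,k)x^k$, and $S(k,m)$ are the Stirling numbers of the second kind. The geometric polynomials are $\omega_k(x)=\sum_{m=0}^k S(k,m)\,m!\,x^m$. *)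

(* Defs.v *)
From HB Require Import structures.
From mathcomp Require Import all_boot all_order all_algebra.
From mathcomp Require Import all_classical all_reals all_analysis.
Set Implicit Arguments. Unset Strict Implicit. Unset Printing Implicit Defensive.
Import Order.TTheory GRing.Theory Num.Theory.
Local Open Scope ring_scope.

Definition rising {R : ringType} (x : R) (n : nat) : R :=
  \prod_(i < n) (x + i%:R).

(* signed Stirling numbers of the first kind:
   x(x-1)...(x-n+1) = \sum_k s(n,k) x^k *)
Definition stirling1 (n k : nat) : int :=
  (\prod_(i < n) ('X - (i%:R)%:P) : {poly int})`_k.

Fixpoint stirling2 (n m : nat) : nat :=
  match n, m with
  | 0, 0 => 1
  | 0, _.+1 => 0
  | _.+1, 0 => 0
  | n'.+1, m'.+1 => m'.+1 * stirling2 n' m'.+1 + stirling2 n' m'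
  end%N.

Definition geom_poly {R : ringType} (k : nat) (x : R) : R :=
  \sum_(0 <= m < k.+1) (stirling2 k m * m`!)%:R * x ^+ m.

(* Main.v *)
Require Import Defs.
From HB Require Import structures.
From mathcomp Require Import all_boot all_order all_algebra.
From mathcomp Require Import all_classical all_reals all_analysis.
From mathcomp Require Import ring lra.
Import Order.TTheory GRing.Theory Num.Theory.
Import numFieldNormedType.Exports.
Local Open Scope classical_set_scope.
Local Open Scope ring_scope.

Lemma risingSl (R : comNzRingType) (x : R) m :
  rising x m.+1 = x * rising (x + 1) m.
Proof.
rewrite /rising big_ord_recl addr0; congr (_ * _).
apply: eq_bigr => i _; rewrite lift0 -natr1. set c := i%:R. ring.
Qed.

Lemma risingSr (R : comNzRingType) (x : R) m :
  rising x m.+1 = rising x m * (x + m%:R).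
Proof. by rewrite /rising big_ord_recr. Qed.

Lemma rising_shift (R : comNzRingType) (x : R) m :
  rising (x + 1) m.+1 = rising x m.+1 + m.+1%:R * rising (x + 1) m.
Proof.
rewrite risingSr risingSl -natr1.
set a := rising _ _; set b := m%:R; ring.
Qed.

Lemma rising0 (R : comNzRingType) m : rising (0 : R) m = (m == 0)%:R.
Proof. by case: m => [|m]; rewrite ?risingSl ?mul0r // /rising big_ord0. Qed.

Lemma rising_stirling1 (R : comNzRingType) (a : R) n :
  rising a n = (-1) ^+ n * \sum_(j < n.+1) (stirling1 n j)%:~R * (- a) ^+ j.
Proof.
set Q := \prod_(i < n) ('X - ((i%:R : R))%:P).
have hQ : map_poly intr (\prod_(i < n) ('X - ((i%:R : int))%:P)) = Q.
  by rewrite map_prod_XsubC; apply: eq_bigr => i _; rewrite rmorph_nat.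
have sQ : size Q = n.+1.
  by rewrite size_prod_XsubC /index_enum unlock -enumT size_enum_ord.
have -> : \sum_(j < n.+1) (stirling1 n j)%:~R * (- a) ^+ j = Q.[- a].
  rewrite (horner_coef_wide _ (eq_leq sQ)); apply: eq_bigr => j _.
  by rewrite -hQ coef_map.
rewrite horner_prod /rising.
have -> : \prod_(i < n) (a + i%:R) = \prod_(i < n) - ('X - (i%:R)%:P).[- a].
  by apply: eq_bigr => i _; rewrite hornerXsubC opprD !opprK.
under [LHS]eq_bigr do rewrite -mulN1r.
by rewrite big_split /= prodr_const card_ord.
Qed.

Definition uterm {R : comNzRingType} (z : R) (m k : nat) : R :=
  rising (k%:R : R) m * z ^+ k.

Lemma series_rec (R : comNzRingType) (z : R) m N :
  (1 - z) * series (uterm z m.+1) N.+1 =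
  m.+1%:R * (series (uterm z m) N.+1 - (m == 0)%:R)
  - rising (N%:R : R) m.+1 * z ^+ N.+1.
Proof.
elim: N => [|N IH].
  rewrite !seriesSr /series /= !big_nil /uterm !rising0 /= !expr0 !mulr1 !add0r.
  by rewrite subrr mulr0 mul0r subr0 mulr0.
rewrite seriesSr mulrDr IH [series (uterm z m) N.+2]seriesSr /uterm.
rewrite -[(N.+1)%:R]natr1 rising_shift.
set S := series _ _; set a := rising (N%:R) m.+1; set b := rising (N%:R + 1) m.
rewrite !exprS.
set c := z ^+ N; set d := m.+1%:R; set e := (m == 0)%:R.
ring.
Qed.

Lemma uterm0 (R : comNzRingType) (z : R) k : uterm z 0 k = z ^+ k.
Proof. by rewrite /uterm /rising big_ord0 mul1r. Qed.

Lemma uterm_ge0 (R : realType) (y : R) m k : 0 <= y -> 0 <= uterm y m k.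
Proof.
move=> y0; rewrite /uterm mulr_ge0 ?exprn_ge0 // /rising prodr_ge0 // => i _.
Qed.

Lemma series_bound (R : realType) (y : R) m : 0 <= y < 1 ->
  exists B, forall N, series (uterm y m) N <= B.
Proof.
move=> /andP[y0 y1]; have y1' : 0 < 1 - y by rewrite subr_gt0.
elim: m => [|m [B HB]].
  exists (1 - y)^-1 => N.
  have -> : series (uterm y 0) N = series (geometric 1 y) N.
    by rewrite !seriesEord /=; apply: eq_bigr => k _; rewrite uterm0 mul1r.
  rewrite geometric_seriesE ?lt_eqF //= mul1r.
  rewrite -[X in _ <= X]mul1r ler_pM2r ?invr_gt0 //.
  by rewrite lerBlDr lerDl exprn_ge0.
have B0 : 0 <= B by apply: le_trans (HB 0%N); rewrite /series /= big_nil.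
exists (m.+1%:R * B / (1 - y)) => -[|N].
  by rewrite /series /= big_nil mulr_ge0 // ?mulr_ge0 // invr_ge0 ltW.
rewrite ler_pdivlMr // mulrC series_rec.
have h1 : 0 <= rising (N%:R : R) m.+1 * y ^+ N.+1.
  by rewrite mulr_ge0 ?exprn_ge0 // /rising prodr_ge0 // => i _.
have h2 : series (uterm y m) N.+1 - (m == 0)%:R <= B.
  have := HB N.+1; have : (0 : R) <= (m == 0)%:R by case: (m == 0).
  lra.
have h3 := ler_wpM2l (ler0n R m.+1) h2.
lra.
Qed.

Lemma term_cvg0 (R : realType) (y : R) m : 0 <= y < 1 ->
  uterm (- y) m @ \oo --> 0.
Proof.
move=> hy; have /andP[y0 y1] := hy.
have : uterm y m @ \oo --> 0.
  apply: cvg_series_cvg_0; apply: nondecreasing_is_cvgn.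
    rewrite seriesEnat; apply: nondecreasing_series => k _ _.
    exact: uterm_ge0.
  have [B HB] := @series_bound R y m hy.
  by exists B => _ [N _ <-].
move=> H; apply: norm_cvg0; apply: cvg_trans H; apply: near_eq_cvg.
near=> k; rewrite /uterm normrM normrX normrN (ger0_norm y0).
rewrite ger0_norm // /rising prodr_ge0 // => i _; exact: addr_ge0.
Unshelve. all: by end_near.
Qed.

Definition Lim {R : realType} (z : R) (m : nat) : R :=
  if m is m'.+1 then m`!%:R * z / (1 - z) ^+ m.+1 else (1 - z)^-1.

Lemma lim_uterm (R : realType) (y : R) m : 0 <= y < 1 ->
  series (uterm (- y) m) @ \oo --> Lim (- y) m.
Proof.
move=> hy; have /andP[y0 y1] := hy.
set z := - y.
have z1 : `|z| < 1 by rewrite normrN ger0_norm.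
have nz : 1 - z != 0 by rewrite /z opprK; apply/lt0r_neq0; lra.
elim: m => [|m IH].
  have -> : series (uterm z 0) = series (geometric 1 z).
    by apply/funext => N; rewrite !seriesEord /=; apply: eq_bigr => k _;
       rewrite uterm0 mul1r.
  by rewrite /Lim -[X in _ --> X]mul1r; exact: cvg_geometric_series.
rewrite -cvg_shiftS.
have -> : [sequence series (uterm z m.+1) n.+1]_n =
   (fun n => (m.+1%:R * (series (uterm z m) n.+1 - (m == 0)%:R)
              - z * uterm z m.+1 n) / (1 - z)).
  apply/funext => n /=; apply: (mulIf nz) ; rewrite divfK // mulrC series_rec.
  by rewrite /uterm exprS; congr (_ - _); rewrite mulrCA.
have -> : Lim z m.+1 = (m.+1%:R * (Lim z m - (m == 0)%:R) - z * 0) / (1 - z).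
  rewrite mulr0 subr0 /Lim; case: m {IH} => [|m].
    rewrite /= expr2; have -> : (1`!)%:R = 1 :> R by [].
    by field; rewrite nz.
  rewrite factS natrM /= subr0 [(1 - z) ^+ m.+3]exprS.
  set w := (1 - z) ^+ m.+2; have wz : w != 0 by rewrite expf_neq0.
  by field; rewrite nz wz.
apply: cvgMr_tmp; apply: cvgB; last by apply: cvgMl_tmp; exact: term_cvg0.
apply: cvgMl_tmp; apply: cvgB; last exact: cvg_cst.
by rewrite (cvg_shiftS (series (uterm z m))).
Qed.

Lemma stirling2_0 j : stirling2 j.+1 0 = 0%N.
Proof. by []. Qed.

Lemma stirling2_gt j m : (j < m)%N -> stirling2 j m = 0%N.
Proof.
elim: j m => [|j IH] [|m] //= H.
rewrite (IH m) // (IH m.+1) ?muln0 //; exact: ltnW.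
Qed.

Lemma pow_stirling2 (R : comNzRingType) (x : R) j :
  (-1) ^+ j * x ^+ j =
  \sum_(m < j.+1) (stirling2 j m)%:R * ((-1) ^+ m * rising x m).
Proof.
elim: j => [|j IH].
  by rewrite big_ord1 /= /rising big_ord0 !expr0 !mulr1.
have key : forall m, - x * ((-1) ^+ m * rising x m) =
   (-1) ^+ m.+1 * rising x m.+1 + m%:R * ((-1) ^+ m * rising x m).
  move=> m; rewrite risingSr exprS.
  set a := (-1) ^+ m; set b := rising x m; set c := m%:R; ring.
have -> : (-1) ^+ j.+1 * x ^+ j.+1 = - x * ((-1) ^+ j * x ^+ j).
  by rewrite !exprS; set a := (-1) ^+ j; set b := x ^+ j; ring.
rewrite IH mulr_sumr.
under eq_bigr do rewrite mulrCA key mulrDr.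
rewrite big_split [RHS]big_ord_recl stirling2_0 mul0r add0r.
under [X in _ = X]eq_bigr => i _ do
  rewrite lift0 [stirling2 _ _]/= natrD natrM mulrDl -mulrA.
rewrite big_split /= addrC; congr (_ + _).
rewrite [LHS]big_ord_recl [RHS]big_ord_recr /= mulr0n mul0r mulr0 add0r.
rewrite (@stirling2_gt _ _ (ltnSn j)) mulr0n mul0r mulr0 addr0.
apply: eq_bigr => i _.
by rewrite mulrCA.
Qed.

Lemma stirling1_n0 n : (1 <= n)%N -> stirling1 n 0 = 0.
Proof.
case: n => // n _; rewrite /stirling1 big_ord_recl /=.
by rewrite polyC0 subr0 coefXM.
Qed.

Lemma cvg_sum_ord (R : realType) K (f : nat -> nat -> R) (l : nat -> R) :
  (forall i, f i @ \oo --> l i) ->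
  (fun N => \sum_(i < K) f i N) @ \oo --> \sum_(i < K) l i.
Proof.
move=> H; elim: K => [|K IH].
  under eq_fun do rewrite big_ord0.
  rewrite big_ord0; exact: cvg_cst.
under eq_fun do rewrite big_ord_recr.
rewrite big_ord_recr; apply: cvgD => //; exact: H.
Qed.

Definition coef {R : realType} (p : R) n j m : R :=
  (-1) ^+ n * (stirling1 n j)%:~R * p ^+ j * (-1) ^+ j *
  (stirling2 j m)%:R * (-1) ^+ m.

Lemma expand (R : realType) (p z : R) n k :
  rising (- (p * k%:R)) n * z ^+ k =
  \sum_(j < n.+1) \sum_(m < j.+1) coef p n j m * uterm z m k.
Proof.
rewrite rising_stirling1 opprK mulr_sumr mulr_suml; apply: eq_bigr => j _.
have s2 : (-1) ^+ j * (-1) ^+ j = 1 :> R by rewrite -exprMn mulN1r opprK expr1n.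
have -> : (p * k%:R) ^+ j = p ^+ j * (-1) ^+ j * ((-1) ^+ j * (k%:R) ^+ j).
  by rewrite exprMn -mulrA [(-1) ^+ j * (_ * _)]mulrA s2 mul1r.
rewrite pow_stirling2 !mulr_sumr mulr_suml; apply: eq_bigr => m _.
by rewrite /coef /uterm !mulrA.
Qed.


Lemma final_eq (R : realType) (p y : R) n : 0 <= y < 1 -> (1 <= n)%N ->
  \sum_(j < n.+1) \sum_(m < j.+1) coef p n j m * Lim (- y) m =
  (-1) ^+ n.+1 * (y / (y + 1)) *
     \sum_(1 <= k < n.+1) (stirling1 n k)%:~R * (- p) ^+ k *
       \sum_(1 <= m < k.+1) (stirling2 k m * m`!)%:R * (- (y + 1)^-1) ^+ m.
Proof.
move=> /andP[y0 y1] n1.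
have y10 : y + 1 != 0 by apply/lt0r_neq0; lra.
rewrite big_ord_recl big1 ?add0r; last first.
  by move=> m _; rewrite /coef stirling1_n0 // mulr0 !mul0r.
rewrite big_add1 big_mkord mulr_sumr; apply: eq_bigr => j _.
rewrite !lift0 big_ord_recl.
have c0 : forall k, coef p n k.+1 0%N = 0.
  by move=> k; rewrite /coef stirling2_0 mulr0 mul0r.
rewrite c0 mul0r add0r big_add1 big_mkord !mulr_sumr; apply: eq_bigr => m _.
rewrite lift0.
rewrite (natrM R (stirling2 j.+1 m.+1) (m.+1)`!) /coef /Lim.
set s := (stirling1 n j.+1)%:~R; set S := (stirling2 j.+1 m.+1)%:R.
set F := ((m.+1)`!)%:R.
rewrite opprK [1 + y]addrC (exprNn p) (exprNn (y + 1)^-1) exprVn.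
rewrite !(exprS (-1)) (exprS p) !(exprS (y + 1)).
set a := (-1) ^+ n; set b := (-1) ^+ j; set c := (-1) ^+ m.
set P := p ^+ j; set w := (y + 1) ^+ m.
have w0 : w != 0 by rewrite expf_neq0.
by field; rewrite y10 w0.
Qed.

Theorem mainTheorem3 (R : realType) (p y : R) (n : nat) :
  0 < p < 1 -> 0 <= y < 1 -> (1 <= n)%N ->
  let Q := series (fun k : nat => rising (- (p * k%:R)) n * (- y) ^+ k) in
  (Q i @[i --> \oo] --> (-1) ^+ n.+1 * (y / (y + 1)) *
     \sum_(1 <= k < n.+1) (stirling1 n k)%:~R * (- p) ^+ k *
       \sum_(1 <= m < k.+1) (stirling2 k m * m`!)%:R * (- (y + 1)^-1) ^+ m)
  /\
  (Q i @[i --> \oo] --> (-1) ^+ n.+1 * (y / (y + 1)) *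
     \sum_(1 <= k < n.+1) (stirling1 n k)%:~R * (- p) ^+ k *
       geom_poly k (- (y + 1)^-1)).
Proof.
move=> _ hy n1 Q.
have Qe : Q = fun N => \sum_(j < n.+1) \sum_(m < j.+1)
                         coef p n j m * series (uterm (- y) m) N.
  apply/funext => N; rewrite /Q seriesEord [LHS]/=.
  under eq_bigr do rewrite expand.
  rewrite exchange_big; apply: eq_bigr => j _.
  rewrite exchange_big; apply: eq_bigr => m _.
  by rewrite -mulr_sumr seriesEord.
have lim : Q @ \oo --> \sum_(j < n.+1) \sum_(m < j.+1) coef p n j m * Lim (- y) m.
  rewrite Qe.
  apply: (@cvg_sum_ord R n.+1
     (fun j N => \sum_(m < j.+1) coef p n j m * series (uterm (- y) m) N)
     (fun j => \sum_(m < j.+1) coef p n j m * Lim (- y) m)) => j.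
  apply: (@cvg_sum_ord R j.+1
     (fun m N => coef p n j m * series (uterm (- y) m) N)
     (fun m => coef p n j m * Lim (- y) m)) => m.
  apply: cvgMl_tmp; exact: lim_uterm.
have e2 : \sum_(1 <= k < n.+1) (stirling1 n k)%:~R * (- p) ^+ k *
       geom_poly k (- (y + 1)^-1) =
     \sum_(1 <= k < n.+1) (stirling1 n k)%:~R * (- p) ^+ k *
       \sum_(1 <= m < k.+1) (stirling2 k m * m`!)%:R * (- (y + 1)^-1) ^+ m.
  apply: eq_big_nat => k /andP[k1 _]; congr (_ * _).
  rewrite /geom_poly big_ltn // ; case: k k1 => // k _.
  by rewrite stirling2_0 mul0n mul0r add0r.
rewrite e2 -final_eq //; split; exact: lim.
Qed.
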